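(* Let $\Theta$ be a nuclear contracting Dwork operator on $M^*$, and let $b$ be a positive integer with $b\le b_\sigma$, and $c,c_1$ rational numbers, such that $\Theta(M^*(b,c))\subset M^*(qb,c+c_1)$. Let $G=(G_{\{u,j_1\},\{v,j_2\}})$ be the matrix of the $K$-linear map induced by $\Theta$ on $M^*(b,0)\otimes K$ with respect to the basis $\{\pi^{b|u|}X^ue_j^*\}$, i.e. $\Theta(\pi^{b|v|}X^ve_{j_2}^* )=\sum_{u,j_1}G_{\{u,j_1\},\{v,j_2\}}\pi^{b|u|}X^ue_{j_1}^*$. Then for every constant $C>0$, except for finitely many row indices $\{u,j_1\}$, we have $\mathrm{ord}_\pi G_{\{u,j_1\},\{v,j_2\}}\ge C$ for all column indices $\{v,j_2\}$.
   Context: $R$ is a complete discrete valuation ring of characteristic $0$ with uniformizer $\pi$, residue field $\mathbf{F}_q$, fraction field $K$, valuation $\mathrm{ord}_\pi$, $|a|_\pi=p^{-\mathrm{ord}_\pi a}$. Fix $n\ge1$; $X^u=\prod X_i^{u_i}$, $|u|=\sum u_i$ for $u\in\mathbf{Z}^n_{\ge0}$. $A_0=\{\sum a_uX^u:a_u\in R,\ |a_u|_\pi\to0\}$ with Gauss norm $\|\cdot\|$ (max of $|a_u|_\pi$), $A=\{\sum a_uX^u\in A_0:\liminf_{|u|\to\infty}\mathrm{ord}_\pi a_u/|u|>0\}$. $\sigma$ is an $R$-algebra endomorphism of $A_0$ with $\sigma(X_i)=X_i^q+\pi f_i$, $f_i\in A$. For $b>0,c$: $L(b,c)=\{\sum a_vX^v:\mathrm{ord}_\pi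 a_v\ge b|v|+c\}$; $b_\sigma>0$ is a fixed rational with $\pi f_i\in L(b_\sigma,0)$ for all $i$. Let $\{e_j^*\}$ be indexed by an at most countable set and $M^*=\{\sum_ja_je_j^*:a_j\in A_0,\ \|a_j\|\to0\}$ (the continuous dual $\mathrm{Hom}^{\mathrm{cont}}_{A_0}(M,\Omega^nA_0)$ of a Banach module $M$ with formal basis $\{e_j\}$, with $e_j^*$ the dual basis), $M^{*\dagger}=\{\sum a_je_j^*\in M^*:a_j\in A\}$, $M^*(b,c)=\{\sum a_je_j^*\in M^*: a_j\in L(b,c)\}$. A Dwork operator on $M^*$ is a continuous $R$-linear endomorphism $\Theta$ of $M^*$ with $\Theta(\sigma(a)f)=a\Theta(f)$ ($a\in A_0$, $f\in M^*$). Writing $\Theta(X^ve_{j_2}^* )=\sum_{u,j_1}G^*_{\{u,j_1\},\{v,j_2\}}X^ue_{j_1}^*$ with $G^*\in R$, $\Theta$ is nuclear if for each fixed $u,v$, $\lim_{j_1\to\infty}\inf_{j_2}\mathrm{ord}_\pi G^*_{\{u,j_1\},\{v,j_2\}}=\infty$. $\Theta$ is contracting if there are rationals $b>0,c,c_1$ with $\Theta(M^*(b,c))\subset M^*(qb,c+c_1)$. *)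

(* Defs.v *)
From HB Require Import structures.
From mathcomp Require Import all_boot all_order all_algebra.
From mathcomp Require Import fraction.
Set Implicit Arguments. Unset Strict Implicit. Unset Printing Implicit Defensive.
Import Order.TTheory GRing.Theory Num.Theory.
Local Open Scope ring_scope.

(* pi^k divides x in R, i.e. ord_pi x >= k. *)
Definition pdiv (R : idomainType) (pi : R) (k : nat) (x : R) : Prop :=
  exists y : R, x = pi ^+ k * y.

(* ord_pi x >= r for a rational r (ord_pi is integer valued, ord 0 = +oo). *)
Definition ordge (R : idomainType) (pi : R) (x : R) (r : rat) : Prop :=
  exists k : nat, r <= k%:R /\ pdiv pi k x.

Definition cofin (T : eqType) (P : T -> Prop) : Prop :=
  exists s : seq T, forall x, x \notin s -> P x.

Definition is_cdvr (R : idomainType) (pi : R) (q : nat) : Prop :=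
  (pi != 0) /\ (pi \notin GRing.unit) /\
      (forall x : R, x != 0 -> exists (u : R) (k : nat),
          u \in GRing.unit /\ x = u * pi ^+ k) /\
      (forall m : nat, (m.+1)%:R != 0 :> R) /\
      (* completeness: pi-adically Cauchy sequences converge *)
      (forall s : nat -> R, (forall k, pdiv pi k (s k.+1 - s k)) ->
          exists l : R, forall k, pdiv pi k (l - s k)) /\
      (* residue field R/piR has exactly q elements *)
      (exists reps : seq R, size reps = q /\
          (forall i j, (i < q)%N -> (j < q)%N -> i <> j ->
              ~ pdiv pi 1 (nth 0 reps i - nth 0 reps j)) /\
          (forall x : R, exists2 r, r \in reps & pdiv pi 1 (x - r))).

Definition toK (R : idomainType) (x : R) : {fraction R} := @FracField.tofrac R x.

Definition ordK_ge (R : idomainType) (pi : R) (y : {fraction R}) (C : rat) : Prop :=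
  exists (e : int) (x : R), y = (toK pi) ^ e * toK x /\ ordge pi x (C - e%:~R).

Definition mon (n : nat) := {ffun 'I_n -> nat}.
Definition mdeg (n : nat) (u : mon n) : nat := (\sum_(i < n) u i)%N.

(* a formal power series sum_u a_u X^u is represented by its coefficients *)
Definition ps (n : nat) (R : idomainType) := mon n -> R.

Definition inA0 (n : nat) (R : idomainType) (pi : R) (a : ps n R) : Prop :=
  forall k : nat, cofin (fun u => pdiv pi k (a u)).

Definition inA (n : nat) (R : idomainType) (pi : R) (a : ps n R) : Prop :=
  inA0 pi a /\ exists eps : rat, 0 < eps /\
     cofin (fun u : mon n => ordge pi (a u) (eps * (mdeg u)%:R)).

Definition inL (n : nat) (R : idomainType) (pi : R) (b c : rat) (a : ps n R) : Prop :=
  forall v : mon n, ordge pi (a v) (b * (mdeg v)%:R + c).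

Definition psmul (n : nat) (R : idomainType) (a a' : ps n R) : ps n R :=
  fun w => \sum_(u : {ffun 'I_n -> 'I_(mdeg w).+1} | [forall i, (u i <= w i)%N])
             a [ffun i => nat_of_ord (u i)] * a' [ffun i => (w i - u i)%N].

Definition Xmon (n : nat) (R : idomainType) (v : mon n) : ps n R :=
  fun u => if u == v then 1 else 0.

Definition unitmon (n : nat) (i : 'I_n) (k : nat) : mon n :=
  [ffun j => if j == i then k else 0%N].

Definition is_frob (n : nat) (R : idomainType) (pi : R) (q : nat)
    (sigma : ps n R -> ps n R) (f : 'I_n -> ps n R) : Prop :=
  (forall a, inA0 pi a -> inA0 pi (sigma a)) /\
     (
      forall a a', inA0 pi a -> inA0 pi a' ->
         forall u, sigma (fun w => a w + a' w) u = sigma a u + sigma a' u) /\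
     (
      forall (r : R) a, inA0 pi a ->
         forall u, sigma (fun w => r * a w) u = r * sigma a u) /\
     (
      forall a a', inA0 pi a -> inA0 pi a' ->
         forall u, sigma (psmul a a') u = psmul (sigma a) (sigma a') u) /\
     (
      forall u, sigma (Xmon R [ffun=> 0%N]) u = Xmon R [ffun=> 0%N] u) /\
     (
      forall i u, sigma (Xmon R (unitmon i 1)) u =
                  Xmon R (unitmon i q) u + pi * f i u).

(* The module M^* : sum_j a_j e_j^*, a_j in A_0, ||a_j|| -> 0               *)

Definition Mel (n : nat) (R : idomainType) (J : countType) := J -> ps n R.

Definition inM (n : nat) (R : idomainType) (pi : R) (J : countType)
    (F : Mel n R J) : Prop :=
  forall k : nat, cofin (fun p : mon n * J => pdiv pi k (F p.2 p.1)).

Definition inMbc (n : nat) (R : idomainType) (pi : R) (J : countType)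
    (b c : rat) (F : Mel n R J) : Prop :=
  inM pi F /\ forall j, inL pi b c (F j).

Definition Mact (n : nat) (R : idomainType) (J : countType)
    (a : ps n R) (F : Mel n R J) : Mel n R J := fun j => psmul a (F j).

Definition ebasis (n : nat) (R : idomainType) (J : countType)
    (v : mon n) (j2 : J) : Mel n R J :=
  fun j u => if (j == j2) && (u == v) then 1 else 0.

Definition dwork_op (n : nat) (R : idomainType) (pi : R) (J : countType)
    (sigma : ps n R -> ps n R) (Theta : Mel n R J -> Mel n R J) : Prop :=
  (forall F, inM pi F -> inM pi (Theta F)) /\
  (forall F F', inM pi F -> inM pi F' -> forall j u,
     Theta (fun j' w => F j' w + F' j' w) j u = Theta F j u + Theta F' j u) /\
  (forall (r : R) F, inM pi F -> forall j u,
     Theta (fun j' w => r * F j' w) j u = r * Theta F j u) /\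
  (forall F, inM pi F -> forall k : nat, exists k' : nat, forall F',
     inM pi F' -> (forall j u, pdiv pi k' (F' j u - F j u)) ->
     forall j u, pdiv pi k (Theta F' j u - Theta F j u)) /\
  (forall a F, inA0 pi a -> inM pi F -> forall j u,
     Theta (Mact (sigma a) F) j u = Mact a (Theta F) j u).

(* matrix G^* : Theta(X^v e_{j2}^* ) = sum G^*_{(u,j1),(v,j2)} X^u e_{j1}^* *)
Definition Gstar (n : nat) (R : idomainType) (J : countType)
    (Theta : Mel n R J -> Mel n R J) (u : mon n) (j1 : J) (v : mon n) (j2 : J) : R :=
  Theta (ebasis R v j2) j1 u.

Definition nuclear (n : nat) (R : idomainType) (pi : R) (J : countType)
    (Theta : Mel n R J -> Mel n R J) : Prop :=
  forall (u v : mon n) (N : nat),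
    cofin (fun j1 : J => forall j2 : J, pdiv pi N (Gstar Theta u j1 v j2)).

Definition contracting (n : nat) (R : idomainType) (pi : R) (q : nat) (J : countType)
    (Theta : Mel n R J -> Mel n R J) : Prop :=
  exists b c c1 : rat, 0 < b /\
    forall F, inMbc pi b c F -> inMbc pi (q%:R * b) (c + c1) (Theta F).

(* Matrix G of the K-linear map induced by Theta on M^*(b,0) (x) K in the
   basis pi^{b|u|} X^u e_j^*: it is the element of K with
   G * pi^{b|u|} = pi^{b|v|} * G^*. *)
Definition Gmat (n : nat) (R : idomainType) (pi : R) (J : countType)
    (Theta : Mel n R J -> Mel n R J) (b : nat)
    (u : mon n) (j1 : J) (v : mon n) (j2 : J) : {fraction R} :=
  toK (pi ^+ (b * mdeg v) * Gstar Theta u j1 v j2) / toK (pi ^+ (b * mdeg u)).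

(* Main.v *)
Require Import Defs.
From HB Require Import structures.
From mathcomp Require Import all_boot all_order all_algebra.
From mathcomp Require Import fraction.
From mathcomp Require Import ring lra zify.
Set Implicit Arguments. Unset Strict Implicit.
Import Order.TTheory GRing.Theory Num.Theory.
Local Open Scope ring_scope.
Lemma natbound (r : rat) : exists k : nat, r <= k%:R.
Proof.
exists (Num.Def.archi_bound `|r|).
apply: le_trans (ler_norm r) _; apply: ltW; exact: archi_boundP.
Qed.

Lemma pdiv0 (R : idomainType) (pi : R) k : Defs.pdiv pi k 0.
Proof. by exists 0; rewrite mulr0. Qed.

Lemma q_ge2 (R : idomainType) (pi : R) (q : nat) : is_cdvr pi q -> (2 <= q)%N.
Proof.
move=> [_ [pinu [_ [_ [_ [reps [hs [_ hcov]]]]]]]].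
have [r0 r0in [y0 e0]] := hcov 0.
have [r1 r1in [y1 e1]] := hcov 1.
move: hs r0in r1in; clear hcov; case: reps => [|a [|a' t]] hs //=; last by rewrite -hs.
rewrite !mem_seq1 => /eqP E0 /eqP E1; subst.
exfalso; move/negP: pinu; apply; apply/unitrP; exists (y1 - y0).
have h : pi * (y1 - y0) = 1.
  move: e0 e1; rewrite expr1 => e0 e1; by rewrite mulrBr -e0 -e1; ring.
by split => //; rewrite mulrC.
Qed.

Lemma ordK_of (R : idomainType) (pi : R) (Hpi : pi != 0) (a b0 N : nat) (x y : R) (C : rat) :
  pi ^+ a * x = pi ^+ N * y -> C <= N%:R - b0%:R ->
  ordK_ge pi (toK (pi ^+ a * x) / toK (pi ^+ b0)) C.
Proof.
move=> E HC; rewrite E; exists (N%:Z - b0%:Z), y; split.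
  have nz : toK pi != 0 by rewrite /toK tofrac_eq.
  rewrite /toK !rmorphM !rmorphXn /= expfzDr // -exprnN -[_ ^ N%:Z]/(_ ^+ N).
  by rewrite mulrAC.
exists 0%N; split; last by exists y; rewrite expr0 mul1r.
rewrite intrD intrN /=; lra.
Qed.

Lemma cofin_all (X : eqType) (T : eqType) (I : seq X) (P : X -> T -> Prop) :
  (forall x, cofin (P x)) -> cofin (fun t => forall x, x \in I -> P x t).
Proof.
move=> H; elim: I => [|x I [s Hs]]; first by exists [::].
have [s0 Hs0] := H x; exists (s0 ++ s) => t; rewrite mem_cat negb_or => /andP[h0 h1].
by move=> y; rewrite inE => /orP[/eqP ->|hy]; [exact: Hs0|exact: Hs].
Qed.

Lemma mon_bounded (n U : nat) : exists s : seq (mon n), forall u, (mdeg u < U)%N -> u \in s.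
Proof.
exists (map (fun g : {ffun 'I_n -> 'I_U} => [ffun i => nat_of_ord (g i)] : mon n) (enum {: {ffun 'I_n -> 'I_U}})).
move=> u hu.
have hi : forall i, (u i < U)%N.
  move=> i; apply: leq_ltn_trans hu; rewrite /mdeg (bigD1 i) //=; exact: leq_addr.
apply/mapP; exists [ffun i => Ordinal (hi i)]; first by rewrite mem_enum.
by apply/ffunP => i; rewrite !ffunE.
Qed.

Theorem lemma4p11
  (n : nat) (Hn : (0 < n)%N)
  (R : idomainType) (pi : R) (q : nat) (HR : is_cdvr pi q)
  (J : countType)
  (sigma : ps n R -> ps n R) (f : 'I_n -> ps n R)
  (Hf : forall i, inA pi (f i))
  (Hsigma : is_frob pi q sigma f)
  (bsig : rat) (Hbsig : 0 < bsig)
  (HbsigL : forall i, inL pi bsig 0 (fun u => pi * f i u))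
  (Theta : Mel n R J -> Mel n R J)
  (HTheta : dwork_op pi sigma Theta)
  (Hnuc : nuclear pi Theta)
  (Hcontr : contracting pi q Theta)
  (b : nat) (Hb : (0 < b)%N) (Hbb : b%:R <= bsig)
  (c c1 : rat)
  (Hbc : forall F, inMbc pi b%:R c F -> inMbc pi (q%:R * b%:R) (c + c1) (Theta F)) :
  forall C : rat, 0 < C ->
    cofin (fun p : mon n * J =>
      forall (v : mon n) (j2 : J), ordK_ge pi (Gmat pi Theta b p.1 p.2 v j2) C).
Proof.
move=> C HC.
have q2 := q_ge2 HR.
have Hpi : pi != 0 by case: HR.
have [HThM [_ [HThZ _]]] := HTheta.
have [k hk] := natbound c.
have [U0 hU0] := natbound (C - c - c1 + k%:R).
have [V0 hV0] := natbound (C + (b * U0)%:R).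
have [Ul hUl] := @mon_bounded n U0.
have [Vl hVl] := @mon_bounded n V0.
have [s hs] := @cofin_all _ _ [seq (u,v) | u <- Ul, v <- Vl]
   (fun x j1 => forall j2, Defs.pdiv pi V0 (Gstar Theta x.1 j1 x.2 j2))
   (fun x => Hnuc x.1 x.2 V0).
exists [seq (u, j) | u <- Ul, j <- s].
move=> [u j1] /= hnot v j2.
rewrite /Gmat.
suff [N [y [E HN]]] : exists N y, pi^+(b*mdeg v) * Gstar Theta u j1 v j2 = pi^+N * y
    /\ C <= N%:R - (b*mdeg u)%:R by move: (ordK_of Hpi E HN).
case: (ltnP (mdeg u) U0) => hu.
  have uin := hUl u hu.
  have j1s : j1 \notin s.
    by apply: contra hnot => hj; exact: (allpairs_f (fun a b => (a,b)) uin hj).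
  have hbu : ((b * mdeg u)%:R <= (b * U0)%:R :> rat) by rewrite ler_nat leq_mul2l ltnW ?orbT.
  case: (ltnP (mdeg v) V0) => hv.
    have [y hy] := hs j1 j1s (u,v) (allpairs_f (fun a b => (a,b)) uin (hVl v hv)) j2.
    exists (b*mdeg v + V0)%N, y; split; first by rewrite hy mulrA -exprD.
    have h0 : (0 <= (b * mdeg v)%:R :> rat) by [].
    rewrite natrD; first [lra | match goal with |- ?g => idtac "L56" g end; fail 100].
  exists (b * mdeg v)%N, (Gstar Theta u j1 v j2); split=> //.
  have : (V0 <= b * mdeg v)%N by apply: leq_trans hv _; rewrite leq_pmull.
  rewrite -(ler_nat rat) => h1; first [lra | match goal with |- ?g => idtac "L59" g end; fail 100].
pose m := (b*mdeg v + k)%N.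
pose F : Mel n R J := fun j' w => pi^+m * ebasis R v j2 j' w.
have Me : inM pi (ebasis R v j2).
  move=> kk; exists [:: (v,j2)] => [[w j]] /=; rewrite inE => hne; rewrite /ebasis.
  case: ifP => h; last exact: pdiv0.
  by move/andP: h hne => [/eqP -> /eqP ->]; rewrite eqxx.
have MF : inM pi F.
  move=> kk; have [s' hs'] := Me kk; exists s' => p hp; have [y hy] := hs' p hp.
  by exists (pi^+m * y); rewrite /F hy mulrCA.
have hF : inMbc pi b%:R c F.
  split => // j w; rewrite /F /ebasis; case: ifP => h.
    move/andP: h=>[_ /eqP ->]; exists m; split; last by exists 1; rewrite mulr1.
    by rewrite /m natrD natrM; first [lra | match goal with |- ?g => idtac "L72" g end; fail 100].
  have [k' hk'] := natbound (b%:R * (mdeg w)%:R + c).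
  by exists k'; split => //; rewrite mulr0; exact: pdiv0.
have [_ hL] := Hbc F hF.
have [K [hK [y' hy']]] := hL j1 u.
have E1 : Theta F j1 u = pi^+m * Gstar Theta u j1 v j2 := HThZ _ _ Me j1 u.
have hd1 : (2 * (b * mdeg u) <= q * (b * mdeg u))%N by rewrite leq_mul2r q2 orbT.
have hd2 : (mdeg u <= b * mdeg u)%N by rewrite leq_pmull.
have hd : (b * mdeg u + mdeg u <= q * b * mdeg u)%N by rewrite -mulnA; lia.
have hU : (U0 <= mdeg u)%N := hu.
move: hd hU; rewrite -(ler_nat rat) -(ler_nat rat U0) natrD !natrM => hd hU.
have hbd : (0 <= b%:R * (mdeg u)%:R :> rat) by apply: mulr_ge0; apply: ler0n.
have hkK' : (k%:R <= K%:R :> rat).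
  clear -hd hU hbd hK hU0 HC hk; lra.
have hkK : (k <= K)%N by rewrite -(ler_nat rat).
exists (K - k)%N, y'; split.
  apply: (mulfI (expf_neq0 k Hpi)).
  by rewrite mulrA -exprD addnC -/m -E1 hy' mulrA -exprD subnKC.
rewrite natrB // ?natrM; clear -hd hU hbd hK hU0 HC hk; first [lra | match goal with |- ?g => idtac "L87" g end; fail 100].
Qed.
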